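(* For all integers $n\ge1$, $$\prod_{k=1}^n(1+z^k)=\prod_{j=1}^n\bigl(\phi_{2j}(z)\bigr)^{\lfloor\frac{n+j}{2j}\rfloor},$$ where $\phi_m(z)$ denotes the $m$th cyclotomic polynomial. *)

(* Defs.v *)
From mathcomp Require Import all_boot all_algebra all_field.

(* Main.v *)
Require Import Defs.
From mathcomp Require Import all_boot all_algebra all_field.
Import GRing.Theory.
Local Open Scope ring_scope.

Lemma prod_eo (G : nat -> {poly int}) k :
  \prod_(0 <= d < 2 * k) G d =
  \prod_(0 <= j < k) G (2 * j)%N * \prod_(0 <= j < k) G (2 * j).+1.
Proof.
elim: k => [|k IH]; first by rewrite !big_geq // mul1r.
rewrite mulnS !addSn add0n !big_nat_recr //= ?IH.
by rewrite -!mulrA; congr (_ * _); rewrite mulrCA.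
Qed.

Lemma divs_prod (F : nat -> {poly int}) n N : (0 < n)%N -> (n < N)%N ->
  \prod_(d <- divisors n) F d = \prod_(0 <= d < N | (d %| n)%N) F d.
Proof.
move=> n0 nN.
rewrite -(big_filter (index_iota 0 N)); apply: perm_big.
apply: uniq_perm; first exact: divisors_uniq.
  by apply: filter_uniq; apply: iota_uniq.
move=> d; rewrite mem_filter -dvdn_divisors // mem_index_iota /=.
case dn: (d %| n)%N => //=; have := dvdn_leq n0 dn => dle.
by rewrite (leq_ltn_trans dle nN).
Qed.
From mathcomp Require Import zify ring.
Lemma dvd_cond m j : (0 < m)%N -> ((j %| m) && ~~ (2*j %| m))%N = (2*j %| m + j)%N.
Proof.
move=> m0; case: j => [|j]; first by rewrite muln0 addn0 !dvd0n; case: m m0.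
have j0 : (0 < j.+1)%N by [].
case jm: (j.+1 %| m)%N => /=.
  case/dvdnP: jm => q ->.
  by rewrite -mulSnr !dvdn_pmul2r // !dvdn2 /= negbK.
apply/esym/negbTE; apply/negP => h.
have : (j.+1 %| m + j.+1)%N by apply: dvdn_trans h; apply: dvdn_mull.
by rewrite dvdn_addl // jm.
Qed.
Lemma keyK m : (0 < m)%N ->
  1 + 'X^m = \prod_(1 <= j < m.+1) 'Phi_(2 * j) ^+ (2 * j %| m + j)%N.
Proof.
move=> m0.
have lt1 : (m < 2 * m.+1)%N by lia.
have lt2 : (2 * m < 2 * m.+1)%N by lia.
have m20 : (0 < 2 * m)%N by lia.
have H1 := prod_Cyclotomic m0; rewrite (divs_prod _ _ _ m0 lt1) big_mkcond /= prod_eo in H1.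
have H2 := prod_Cyclotomic m20; rewrite (divs_prod _ _ _ m20 lt2) big_mkcond /= prod_eo in H2.
set Q := \prod_(0 <= j < m.+1) (if ((j %| m) && ~~ (2*j %| m))%N then 'Phi_(2*j) else 1).
have E : 'X^(2 * m) - 1 = ('X^m - 1) * Q :> {poly int}.
  rewrite -H1 -H2 mulrAC; congr (_ * _).
    rewrite -big_split /=; apply: eq_bigr => j _.
    rewrite dvdn_pmul2l //.
    case jm: (j %| m)%N; case: (boolP (2 * j %| m)%N) => h /=;
      rewrite ?mulr1 ?mul1r //.
    by move: jm; rewrite (dvdn_trans _ h) // dvdn_mull.
  apply: eq_bigr => j _.
  by rewrite Gauss_dvdr // coprime_sym coprime2n /= oddM.
have E2 : 'X^(2 * m) - 1 = ('X^m - 1) * (1 + 'X^m) :> {poly int}.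
  rewrite mulrDr mulr1 mulrBl -exprD mul1r mul2n -addnn; ring.
have nz : 'X^m - 1 != 0 :> {poly int}.
  by apply: monic_neq0; rewrite -[1]/(1%:P); apply: monicXnsubC.
rewrite E in E2; have := mulfI nz E2 => <-.
rewrite /Q big_ltn // dvd0n; case: m m0 {H1 H2 E E2 nz lt1 lt2 m20 Q} => // m _ /=.
rewrite mul1r; apply: eq_bigr => j _.
rewrite dvd_cond //; by case: (_ %| _)%N; rewrite ?expr1 ?expr0.
Qed.
Lemma mainAll (n : nat) :
  \prod_(1 <= k < n.+1) (1 + 'X^k : {poly int}) =
  \prod_(1 <= j < n.+1) ('Phi_(2 * j)) ^+ ((n + j) %/ (2 * j)).
Proof.
elim: n => [|n IH]; first by rewrite !big_geq.
rewrite big_nat_recr //= IH keyK //.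
rewrite [RHS](@eq_big_nat _ _ _ 1 n.+2 _ (fun j => 'Phi_(2 * j) ^+ (2 * j %| n.+1 + j)%N * 'Phi_(2 * j) ^+ ((n + j) %/ (2 * j)))); last first.
  move=> j /andP[j1 _].
  by rewrite -exprD addSn divnS; [rewrite addnC | lia].
rewrite big_split /= mulrC; congr (_ * _).
rewrite [RHS]big_nat_recr //=.
have -> : ((n + n.+1) %/ (2 * n.+1) = 0)%N by apply: divn_small; lia.
by rewrite expr0 mulr1.
Qed.

Theorem lemma5 (n : nat) (hn : (1 <= n)%N) :
  \prod_(1 <= k < n.+1) (1 + 'X^k : {poly int}) =
  \prod_(1 <= j < n.+1) ('Phi_(2 * j)) ^+ ((n + j) %/ (2 * j)).
Proof. exact: mainAll. Qed.
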